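(* Suppose there are real numbers $a_k,b_k$, $k\in\{1,\dots,m\}$, such that $g(x)=\min_{k\in[m]}\{a_k+b_kx\}$ for all $x\in[0,1]$. Then $\sup_{\mathbf x\in[0,1]^c}\mathcal R(\mathbf x)$ equals the optimal value of the linear program $$\max_{\pi\ge 0,\ (g_j)_{j=1}^c}\ \sum_{j=1}^c\lambda g_j\quad\text{s.t.}\quad g_j\le a_k\pi_j+b_k\frac{c-j+1}{\lambda d}\pi_{j-1}\ \ \forall k\in[m],\,j\in[c];\qquad \pi_j\ge \frac{c-j+1}{\lambda d}\pi_{j-1}\ \ \forall j\in[c];\qquad \sum_{j=0}^c\pi_j=1 .$$
   Context: Setting. Fix $c\in\mathbb N$ (number of identical units of a single reusable resource), an arrival rate $\lambda>0$ and a mean usage duration $d>0$, with $x^*:=c/(\lambda d)\in(0,1)$. Let $g:[0,1]\to\mathbb R$ be concave, non-decreasing, with $g(0)=0$ (the reward function). A stock-dependent policy is a vector $\mathbf x=(x_1,\dots,x_c)\in[0,1]^c$, where $x_j$ is the admission probability used when exactly $j$ units are available (the admission probability is $0$ when no unit is available). Its steady-state distribution is the unique probability vector $\pi=(\pi_0,\dots,\pi_c)$ satisfying $\pi_j\lambda x_j=\pi_{j-1}(c-j+1)/d$ for all $j\in\{1,\dots,c\}$, and its long-run average reward is $\mathcal R(\mathbf x)=\sum_{j=1}^c\pi_j\lambda g(x_j)$. *)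

(* Defs.v *)
From HB Require Import structures.
From mathcomp Require Import all_boot all_order all_algebra.
From mathcomp Require Import all_classical all_reals.
Set Implicit Arguments. Unset Strict Implicit. Unset Printing Implicit Defensive.
Import Order.TTheory GRing.Theory Num.Theory.
Local Open Scope ring_scope.
Local Open Scope classical_set_scope.

Section Defs.
Variable R : realType.

Definition concave01 (g : R -> R) : Prop :=
  forall x y t : R, 0 <= x <= 1 -> 0 <= y <= 1 -> 0 <= t <= 1 ->
    t * g x + (1 - t) * g y <= g (t * x + (1 - t) * y).

Definition nondecr01 (g : R -> R) : Prop :=
  forall x y : R, 0 <= x -> x <= y -> y <= 1 -> g x <= g y.

Definition policy (c : nat) (x : nat -> R) : Prop :=
  forall j : nat, (1 <= j <= c)%N -> 0 <= x j <= 1.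

Definition steady_state (c : nat) (lam d : R) (x pi : nat -> R) : Prop :=
  [/\ forall j : nat, (j <= c)%N -> 0 <= pi j,
      \sum_(0 <= j < c.+1) pi j = 1
    & forall j : nat, (1 <= j <= c)%N ->
        pi j * lam * x j = pi j.-1 * (c - j).+1%:R / d].

Definition avg_reward (c : nat) (lam : R) (g : R -> R) (x pi : nat -> R) : R :=
  \sum_(1 <= j < c.+1) pi j * lam * g (x j).

Definition reward_set (c : nat) (lam d : R) (g : R -> R) : set R :=
  [set r | exists x pi : nat -> R,
     [/\ policy c x, steady_state c lam d x pi & r = avg_reward c lam g x pi]].

Definition lp_feasible (c m : nat) (lam d : R) (a b : 'I_m -> R)
  (pi gg : nat -> R) : Prop :=
  [/\ forall j : nat, (j <= c)%N -> 0 <= pi j,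
      forall (k : 'I_m) (j : nat), (1 <= j <= c)%N ->
        gg j <= a k * pi j + b k * ((c - j).+1%:R / (lam * d)) * pi j.-1,
      forall j : nat, (1 <= j <= c)%N ->
        (c - j).+1%:R / (lam * d) * pi j.-1 <= pi j
    & \sum_(0 <= j < c.+1) pi j = 1].

Definition lp_objective (c : nat) (lam : R) (gg : nat -> R) : R :=
  \sum_(1 <= j < c.+1) lam * gg j.

End Defs.

(* Main.v *)
Require Import Defs.
From HB Require Import structures.
From mathcomp Require Import all_boot all_order all_algebra.
From mathcomp Require Import all_classical all_reals all_analysis.
From mathcomp Require Import ring lra.
Import numFieldNormedType.Exports.
Import Order.TTheory GRing.Theory Num.Theory.
Local Open Scope ring_scope.
Local Open Scope classical_set_scope.

Lemma reward_lp (R : realType) (c : nat) (lam d : R) (g : R -> R)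
  (m : nat) (a b : 'I_m -> R) (x pi : nat -> R) :
  0 < lam -> 0 < d ->
  (forall x : R, 0 <= x <= 1 -> (forall k : 'I_m, g x <= a k + b k * x)) ->
  policy c x -> steady_state c lam d x pi ->
  lp_feasible c lam d a b pi (fun j => pi j * g (x j)) /\
  lp_objective c lam (fun j => pi j * g (x j)) = avg_reward c lam g x pi.
Proof.
move=> lam0 d0 hg hx [pi0 hsum heq].
have key j : (1 <= j <= c)%N ->
    (c - j).+1%:R / (lam * d) * pi j.-1 = pi j * x j.
  move=> hj; have := heq j hj => e.
  have lamn : lam != 0 by rewrite gt_eqF.
  have dn : d != 0 by rewrite gt_eqF.
  apply: (mulfI lamn).
  transitivity (pi j * lam * x j); last by ring.
  by rewrite e; field; rewrite dn lamn.
split; last first.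
  by apply: eq_bigr => j _; rewrite /=; ring.
split => //.
- move=> k j hj; rewrite -mulrA key //.
  have [pj0 _] : 0 <= pi j /\ True by split=> //; apply: pi0; case/andP: hj.
  rewrite -(mulrC (pi j)) mulrA [b k * pi j]mulrC -mulrA -mulrDr [_ * g _]mulrC.
  rewrite mulrC ler_wpM2l //. apply: hg; exact: hx.
- move=> j hj; rewrite key //.
  have pj0 : 0 <= pi j by apply: pi0; case/andP: hj.
  have [_ x1] := andP (hx j hj).
  by rewrite ler_piMr.
Qed.

Lemma lp_reward (R : realType) (c : nat) (lam d : R) (g : R -> R)
  (m : nat) (a b : 'I_m -> R) (k0 : 'I_m) (pi gg : nat -> R) :
  0 < lam -> 0 < d ->
  (forall x : R, 0 <= x <= 1 -> exists k : 'I_m, g x = a k + b k * x) ->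
  lp_feasible c lam d a b pi gg ->
  exists x, [/\ policy c x, steady_state c lam d x pi &
     lp_objective c lam gg <= avg_reward c lam g x pi].
Proof.
move=> lam0 d0 hg [pi0 hgg hpi hsum].
have lamn : lam != 0 by rewrite gt_eqF.
have dn : d != 0 by rewrite gt_eqF.
have tpos j : 0 < (c - j).+1%:R / (lam * d) by rewrite divr_gt0 ?ltr0Sn ?mulr_gt0.
have pim1 j : (1 <= j <= c)%N -> pi j = 0 -> pi j.-1 = 0.
  move=> hj pj0; have := hpi j hj; rewrite pj0 pmulr_rle0 // => h.
  apply: le_anti; rewrite h pi0 //; case/andP: hj => _ hj; apply: leq_trans hj; exact: leq_pred.
pose x j := if pi j == 0 then 0 else (c - j).+1%:R / (lam * d) * pi j.-1 / pi j.
have hx : policy c x.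
  move=> j hj; rewrite /x; case: eqP => [_|pn0]; first by rewrite lexx ler01.
  have pj : 0 < pi j by rewrite lt_def; apply/andP; split; [apply/eqP | apply: pi0; case/andP: hj].
  have pj1 : 0 <= pi j.-1 by apply: pi0; case/andP: hj => _ hj; apply: leq_trans hj; exact: leq_pred.
  apply/andP; split; first by apply: divr_ge0; [apply: mulr_ge0 =>//; apply: ltW | apply: ltW].

  by rewrite ler_pdivrMr // mul1r hpi.
exists x; split => //.
  split => // j hj; rewrite /x; case: eqP => [pj0|pn0].
    by rewrite pj0 (pim1 j hj pj0) !mul0r.
  by field; rewrite dn lamn andbT; apply/eqP.
apply: ler_sum_nat => j hj.
have hj' : (1 <= j <= c)%N by case/andP: hj => h1 h2; rewrite h1 -ltnS.
rewrite [pi j * lam]mulrC -mulrA; apply: ler_wpM2l; first exact: ltW.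
have := hx j hj'; rewrite /x; case: eqP => [pj0|pn0] hxj.
  rewrite pj0 mul0r; have := hgg k0 j hj'; by rewrite pj0 (pim1 j hj' pj0) !mulr0 addr0.
have [k hk] := hg _ hxj; rewrite hk.
apply: le_trans (hgg k j hj') _; rewrite le_eqVlt; apply/orP; left; apply/eqP.
by field; rewrite dn lamn /= ?andbT; apply/eqP.
Qed.
Import ArrowAsProduct.
Local Notation PT R := {ptws nat -> R}.

Lemma projc (R : realType) (i : nat) : continuous (fun p : PT R => p i).
Proof. exact: (@proj_continuous nat (fun _ => R) i). Qed.

Lemma cont_sum (R : realType) (I : Type) (s : seq I) (P : pred I) (F : I -> PT R -> R) :
  (forall i, continuous (F i)) -> continuous (fun p => \sum_(i <- s | P i) F i p).
Proof.
move=> hF; elim: s => [|i s IH].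
  have -> : (fun p : PT R => \sum_(i <- [::] | P i) F i p) = (fun _ => 0).
    by apply: funext => p; rewrite big_nil.
  exact: cst_continuous.
have -> : (fun p : PT R => \sum_(j <- i :: s | P j) F j p) =
   (fun p => (if P i then F i p else 0) + \sum_(j <- s | P j) F j p).
  by apply: funext => p; rewrite big_cons; case: (P i); rewrite ?add0r.
move=> x; apply: continuousD; last exact: IH.
case: (P i); [exact: hF | exact: cst_continuous].
Qed.

Lemma cont_min (R : realType) (I : Type) (s : seq I) (F : I -> PT R -> R) h0 :
  continuous h0 -> (forall i, continuous (F i)) ->
  continuous (fun p => \big[Num.min/h0 p]_(i <- s) F i p).
Proof.
move=> h hF; elim: s => [|i s IH].
  have -> : (fun p : PT R => \big[Num.min/h0 p]_(i <- [::]) F i p) = h0.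
    by apply: funext => p; rewrite big_nil.
  exact: h.
have -> : (fun p : PT R => \big[Num.min/h0 p]_(j <- i :: s) F j p) =
   (fun p => Num.min (F i p) (\big[Num.min/h0 p]_(j <- s) F j p)).
  by apply: funext => p; rewrite big_cons.
move=> x; apply: (@continuous_min R _ (F i) (fun p => \big[Num.min/h0 p]_(j <- s) F j p)); [exact: hF | exact: IH].
Qed.

Lemma closed_le0 (R : realType) (phi : PT R -> R) : continuous phi -> closed [set p | phi p <= 0].
Proof. move=> h; have := proj1 (continuous_closedP phi) h _ (@closed_le R 0). by []. Qed.

Lemma cpt01 (R : realType) : compact [set p : PT R | forall i, `[(0:R), 1]%classic (p i)].
Proof. apply: (@tychonoff nat (fun _ => R) (fun _ => `[(0:R),1]%classic)) => _; exact: segment_compact. Qed.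

Lemma le_sum1 (R : realType) c (p : nat -> R) i :
  (forall j, (j <= c)%N -> 0 <= p j) -> \sum_(0 <= j < c.+1) p j = 1 -> (i <= c)%N -> p i <= 1.
Proof.
move=> p0 hs hi; rewrite -hs (bigD1_seq i); first last.
- by rewrite /index_iota iota_uniq.
- by rewrite mem_index_iota ltnS.
rewrite lerDl big_seq_cond; apply: sumr_ge0 => j /andP [hj _]; apply: p0.
by move: hj; rewrite mem_index_iota ltnS.
Qed.

Lemma bigmin_le (R : realType) (I : eqType) (r : seq I) (x0 : R) (F : I -> R) k :
  k \in r -> \big[Num.min/x0]_(i <- r) F i <= F k.
Proof.
elim: r => [//|i r IH]; rewrite in_cons big_cons => /orP [/eqP <-|hk].
  by rewrite ge_min lexx.
by rewrite ge_min IH // orbT.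
Qed.

Lemma le_bigmin (R : realType) (I : Type) (r : seq I) (x0 y : R) (F : I -> R) :
  y <= x0 -> (forall i, y <= F i) -> y <= \big[Num.min/x0]_(i <- r) F i.
Proof.
move=> h0 hF; elim: r => [|i r IH]; first by rewrite big_nil.
by rewrite big_cons le_min hF IH.
Qed.

Lemma lp_max (R : realType) c (lam d : R) m (a b : 'I_m -> R) (k0 : 'I_m) :
 0 < lam -> 0 < d ->
 exists pi gg, lp_feasible c lam d a b pi gg /\
   forall pi' gg', lp_feasible c lam d a b pi' gg' ->
     lp_objective c lam gg' <= lp_objective c lam gg.
Proof.
move=> lam0 d0.
pose tt j := (c - j).+1%:R / (lam * d).
pose L k j (p : PT R) := a k * p j + b k * tt j * p j.-1.
pose G (p : PT R) j := \big[Num.min/L k0 j p]_(k < m) L k j p.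
pose Obj (p : PT R) := \sum_(1 <= j < c.+1) lam * G p j.
pose S (p : PT R) := \sum_(0 <= j < c.+1) p j.
pose phi j (p : PT R) := if (1 <= j <= c)%N then tt j * p j.-1 - p j else 0.
pose B := [set p : PT R | forall i, `[(0:R), 1]%classic (p i)].
pose C := [set p : PT R | forall j, phi j p <= 0] `&`
   ([set p | S p - 1 <= 0] `&` [set p | 1 - S p <= 0]).
have cM (u : R) i : continuous (fun p : PT R => u * p i).
  move=> x; apply: (continuousM (s := fun _ => u) (t := fun p : PT R => p i)).
    exact: cst_continuous.
  exact: projc.
have cMf (u : R) (f : PT R -> R) : continuous f -> continuous (fun p : PT R => u * f p).
  move=> hf x; apply: (continuousM (s := fun _ => u) (t := f)).
    exact: cst_continuous.
  exact: hf.
have hL k j : continuous (L k j).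
  move=> x; apply: (continuousD (f := fun p : PT R => a k * p j) (g := fun p : PT R => b k * tt j * p j.-1)).
    exact: cM.
  exact: cM.
have hG j : continuous (G ^~ j) by apply: cont_min.
have hObj : continuous Obj by apply: cont_sum => j; apply: cMf; exact: hG.
have hS : continuous S by apply: cont_sum => j; exact: projc.
have clC : closed C.
  apply: closedI; last apply: closedI.
  - have -> : [set p : PT R | forall j, phi j p <= 0] =
        \bigcap_(j in [set: nat]) [set p | phi j p <= 0].
      apply/seteqP; split => p /= h.
        by move=> j _; exact: h.
      by move=> j; exact: (h j I).
    apply: closed_bigI => j _; apply: closed_le0.
    case hj: (1 <= j <= c)%N; rewrite /phi hj; last exact: cst_continuous.
    move=> x; apply: (continuousB (f := fun p : PT R => tt j * p j.-1) (g := fun p : PT R => p j)); [exact: cM | exact: projc].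
  - apply: closed_le0 => x; apply: (continuousB (f := S) (g := fun _ => 1)); [exact: hS | exact: cst_continuous].
  - apply: closed_le0 => x; apply: (continuousB (f := fun _ : PT R => (1:R)) (g := S)); [exact: cst_continuous | exact: hS].
have cK : compact (B `&` C) by apply: compact_closedI => //; exact: cpt01.
pose e (p : nat -> R) : PT R := fun i => if (i <= c)%N then p i else 0.
have inK (p : nat -> R) : (forall j, (j <= c)%N -> 0 <= p j) ->
    (forall j, (1 <= j <= c)%N -> tt j * p j.-1 <= p j) ->
    \sum_(0 <= j < c.+1) p j = 1 -> (B `&` C) (e p).
  move=> p0 hp hs.
  have hSe : S (e p) = 1.
    rewrite -hs; apply: eq_big_nat => i /andP [_ hi].
    by rewrite /e; rewrite ltnS in hi; rewrite hi.
  split; last split; last split.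
  - move=> i; rewrite /= in_itv /= /e; case: ifP => hi; last by rewrite lexx ler01.
    by rewrite p0 // (@le_sum1 R c p i p0 hs hi).
  - move=> j; rewrite /phi; case hj: (1 <= j <= c)%N => //.
    have hj1 : (j.-1 <= c)%N by case/andP: hj => _ h; apply: leq_trans h; exact: leq_pred.
    case/andP: hj => hj0 hjc.
    rewrite /e hj1 hjc subr_le0; apply: hp; by rewrite hj0.
  - by rewrite /= hSe subrr.
  - by rewrite /= hSe subrr.
have K0 : (B `&` C) !=set0.
  exists (e (fun j => if j == c then 1 else 0)); apply: inK.
  - by move=> j _; case: eqP.
  - move=> j /andP [h1 h2]; have -> : (j.-1 == c) = false.
      by apply/negbTE; rewrite neq_ltn; apply/orP; left; rewrite prednK // (leq_trans _ h2).
    by rewrite mulr0; case: eqP.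
  - rewrite big_nat_recr //= eqxx big_nat_cond big1 ?add0r // => i /andP [/andP [_ hi] _].
    by rewrite ltn_eqF.
have cO : {within B `&` C, continuous Obj} by exact: continuous_subspaceT.
have [ps psK psmax] := compact_EVT_max K0 cK cO.
move: (psK); rewrite inE => -[psB [psphi [psS1 psS2]]].
have hL1 (p : nat -> R) k j : (1 <= j <= c)%N ->
    L k j (e p) = a k * p j + b k * ((c - j).+1%:R / (lam * d)) * p j.-1.
  move=> hj.
  have hj1 : (j.-1 <= c)%N by case/andP: hj => _ h; apply: leq_trans h; exact: leq_pred.
  by case/andP: hj => _ hjc; rewrite /L /e hj1 hjc.
exists ps, (fun j => G ps j); split.
  split.
  - by move=> j _; have := psB j; rewrite /= in_itv /= => /andP [].
  - move=> k j hj; rewrite /G; apply: bigmin_le; exact: mem_index_enum.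
  - by move=> j hj; have := psphi j; rewrite /phi hj subr_le0.
  - apply: le_anti; apply/andP; split.
      by move: psS1; rewrite /= subr_le0.
    by move: psS2; rewrite /= subr_le0.
move=> pi' gg' [p0 hgg hp hs].
have := psmax (e pi') (mem_set (inK pi' p0 hp hs)).
apply: le_trans; apply: ler_sum_nat => j hj.
have hj' : (1 <= j <= c)%N by case/andP: hj => h1 h2; rewrite h1 -ltnS.
apply: ler_wpM2l; first exact: ltW.
apply: le_bigmin => [|k]; rewrite hL1 //; exact: hgg.
Qed.
Theorem theorem1 (R : realType) (c : nat) (lam d : R) (g : R -> R)
  (m : nat) (a b : 'I_m -> R) :
  (0 < c)%N -> 0 < lam -> 0 < d ->
  0 < c%:R / (lam * d) < 1 ->
  concave01 g -> nondecr01 g -> g 0 = 0 ->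
  (forall x : R, 0 <= x <= 1 ->
     (forall k : 'I_m, g x <= a k + b k * x) /\
     (exists k : 'I_m, g x = a k + b k * x)) ->
  (* the LP optimum exists and equals sup_x R(x) *)
  (exists pi gg : nat -> R,
     lp_feasible c lam d a b pi gg /\
     lp_objective c lam gg = sup (reward_set c lam d g)) /\
  (forall pi gg : nat -> R, lp_feasible c lam d a b pi gg ->
     lp_objective c lam gg <= sup (reward_set c lam d g)).
Proof.
move=> c0 lam0 d0 _ _ _ _ hg.
have [k0 _] : exists k0 : 'I_m, True.
  have [_ [k _]] := hg 0 (ltac:(by rewrite lexx ler01)); by exists k.
have [ps [gs [fs maxs]]] := @lp_max R c lam d m a b k0 lam0 d0.
have ub : ubound (reward_set c lam d g) (lp_objective c lam gs).
  move=> r [x [pi [hx hss ->]]].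
  have [hf he] := @reward_lp R c lam d g m a b x pi lam0 d0 (fun x hx => (hg x hx).1) hx hss.
  rewrite -he; exact: maxs _ _ hf.
have [x [hx hss hle]] := @lp_reward R c lam d g m a b k0 ps gs lam0 d0 (fun x hx => (hg x hx).2) fs.
have inS : reward_set c lam d g (avg_reward c lam g x ps) by exists x, ps.
have hsup : sup (reward_set c lam d g) = lp_objective c lam gs.
  apply: le_anti; apply/andP; split.
    by apply: ge_sup => //; exists (avg_reward c lam g x ps).
  apply: le_trans hle _; apply: sup_upper_bound => //; split.
    by exists (avg_reward c lam g x ps).
  by exists (lp_objective c lam gs).
split.
  by exists ps, gs; split => //; rewrite hsup.
move=> pi gg hf; rewrite hsup. have := maxs pi gg hf. exact: id.
Qed.
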